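(* Let $X_1,X_2,\dots$ be independent non-negative random variables and $a_1,a_2,\dots>0$. Assume there exist $b,K>0$ such that $\mathbb P(X_i\le x)\le Kx^b$ for all $i\ge1$ and all $x>0$. Then for every $p\in[1,\infty)$ with $p/b\notin\mathbb Z$, setting $n=\lceil p/b\rceil$, there exists $C=C(b,K,p)>0$ (not depending on the $a_i$) such that $$\mathbb E\Big[\Big(\sum_{i=1}^na_iX_i\Big)^{-p}\Big]\le C\,a_1^{-b}\cdots a_{n-1}^{-b}\,a_n^{-p+b(n-1)}.$$ *)

(* Defs.v *)
From HB Require Import structures.
From mathcomp Require Import all_boot all_order all_algebra.
From mathcomp Require Import all_classical all_reals all_analysis.
Set Implicit Arguments. Unset Strict Implicit. Unset Printing Implicit Defensive.
Import Order.TTheory GRing.Theory Num.Theory.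
Local Open Scope classical_set_scope.
Local Open Scope ring_scope.

Definition mutually_independent (d : measure_display) (T : measurableType d)
  (R : realType) (P : probability T R) (X : nat -> T -> R) : Prop :=
  forall (J : seq nat) (B : nat -> set R), uniq J ->
    (forall i, i \in J -> measurable (B i)) ->
    P (\big[setI/setT]_(i <- J) (X i @^-1` B i)) =
    (\prod_(i <- J) P (X i @^-1` B i))%E.

Definition neg_pow (R : realType) (p : R) (y : R) : \bar R :=
  if 0 < y then ((y `^ (- p))%:E) else +oo%E.

(* Main.v *)
Require Import Defs.
From HB Require Import structures.
From mathcomp Require Import all_boot all_order all_algebra.
From mathcomp Require Import all_classical all_reals all_analysis.
From mathcomp Require Import ring.
Import Order.TTheory GRing.Theory Num.Theory.
Local Open Scope classical_set_scope.
Local Open Scope ring_scope.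
Import measurable_realfun.

Section Geo.
Variable R : realType.
Lemma geo_le (a z : R) : 0 <= a -> 0 < z -> z < 1 ->
  (\sum_(k <oo) (a * z ^+ k)%:E <= (a / (1 - z))%:E)%E.
Proof.
move=> a0 z0 z1.
have -> : (\sum_(k <oo) (a * z ^+ k)%:E =
   ereal_sup (range (fun n => \sum_(0 <= k < n) (a * z ^+ k)%:E)))%E.
  apply/cvg_lim => //; apply/ereal_nondecreasing_cvgn/ereal_nondecreasing_series.
  by move=> k _; rewrite lee_fin mulr_ge0 // exprn_ge0 // ltW.
apply: ge_ereal_sup; rewrite /ubound /= => _ [N _ <-].
rewrite sumEFin lee_fin.
have h : `|z| < 1 by rewrite ger0_norm // ltW.
exact: (geometric_le_lim N a0 z0 h).
Qed.
End Geo.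
Lemma powR_lt1 {R : realType} (e : R) : e < 0 -> 2 `^ e < 1.
Proof.
move=> e0; rewrite /powR ifF; last by apply/negbTE; rewrite pnatr_eq0.
by rewrite expR_lt1 nmulr_rlt0 // ln_gt0 // ltr1n.
Qed.
Lemma n_facts (R : realType) (b p : R) : 0 < b -> 0 < p -> ~ (p / b \is a Num.int) ->
  (0 < `|Num.ceil (p / b)|)%N /\ b * (`|Num.ceil (p / b)|%N.-1)%:R < p
  /\ p < b * (`|Num.ceil (p / b)|%N)%:R.
Proof.
move=> b0 p0 nint.
set x := p / b.
have x0 : 0 < x by rewrite divr_gt0.
have c0 : 0 < Num.ceil x by rewrite ceil_gt0.
have nE : (`|Num.ceil x|%N)%:R = (Num.ceil x)%:~R :> R.
  by rewrite natr_absz gtr0_norm.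
have [lt1 le2] := andP (ceil_itv x).
have lt2 : x < (Num.ceil x)%:~R.
  rewrite lt_neqAle le2 andbT; apply/negP => /eqP hx; apply: nint.
  by rewrite -/x intrEceil -hx.
have pE : p = x * b by rewrite /x divfK // gt_eqF.
split; first by rewrite -(@ltr0n R) nE ltr0z.
split.
  rewrite pE [x * b]mulrC ltr_pM2l // -subn1 natrB ?absz_gt0 ?gt_eqF // nE.
  by move: lt1; rewrite rmorphB.
by rewrite pE [x * b]mulrC ltr_pM2l // nE.
Qed.
Section PW.
Variable R : realType.
Local Open Scope ereal_scope.

Lemma term_le_series (u : nat -> \bar R) k : (forall i, 0 <= u i) ->
  u k <= \sum_(i <oo) u i.
Proof.
move=> u0; apply: le_trans (nneseries_lim_ge k.+1 (fun i _ _ => u0 i)).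
by rewrite big_nat_recr //= leeDr // sume_ge0.
Qed.

Lemma series_cst_infty (u : nat -> \bar R) (m : R) : (0 < m)%R ->
  (forall k, m%:E <= u k) -> \sum_(i <oo) u i = +oo.
Proof.
move=> m0 um.
have u0 i : 0 <= u i by apply: le_trans (um i); rewrite lee_fin ltW.
have s0 := nneseries_ge0 (fun i _ _ => u0 i).
destruct (\sum_(i <oo) u i) as [r| |] eqn:sE; last by move: (s0 (fun _ => true) 0%N); rewrite sE.
  2: by [].
exfalso.
set N := Num.bound (`|r| / m).
have hN := @archi_boundP R (`|r| / m) (divr_ge0 (normr_ge0 r) (ltW m0)).
have hle : \sum_(0 <= i < N) u i <= r%:E by rewrite -sE; exact: nneseries_lim_ge.
move: hle; apply/negP; rewrite -ltNge.
apply: (@lt_le_trans _ _ (\sum_(0 <= i < N) m%:E)).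
  rewrite sumEFin lte_fin sumr_const_nat subn0 -mulr_natr.
  apply: le_lt_trans (ler_norm r) _.
  by rewrite mulrC -ltr_pdivrMr.
by apply: lee_sum => i _.
Qed.
End PW.
Section PW2.
Variable R : realType.

Lemma anti (p u v : R) : 0 <= p -> 0 < u -> u <= v -> v `^ (-p) <= u `^ (-p).
Proof.
move=> p0 u0 uv; have v0 := lt_le_trans u0 uv.
rewrite !powRN lef_pV2 ?posrE ?powR_gt0 //.
by apply: ge0_ler_powR => //; rewrite nnegrE ltW.
Qed.

Lemma two_big (x : R) : exists k, x < 2 ^+ k.
Proof.
exists (Num.bound `|x|).
have h := @archi_boundP R `|x| (normr_ge0 x).
apply: le_lt_trans (ler_norm x) (lt_trans h _).
rewrite -natrX ltr_nat; exact: ltn_expl.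
Qed.

Definition al (c p : R) k := (c * 2 ^+ k) `^ (- p).
Definition be (c p : R) k := (c / 2 ^+ k.+1) `^ (- p).

Lemma pointwise (p c y : R) : 0 <= p -> 0 < c -> 0 <= y ->
  (neg_pow p y <= \sum_(k <oo) (al c p k * (y <= c * 2 ^+ k.+1)%R%:R)%:E
               + \sum_(k <oo) (be c p k * (y <= c / 2 ^+ k)%R%:R)%:E)%E.
Proof.
move=> p0 c0 y0.
have al0 k : (0 <= (al c p k * (y <= c * 2 ^+ k.+1)%R%:R)%:E)%E.
  by rewrite lee_fin mulr_ge0 ?powR_ge0 ?ler0n.
have be0 k : (0 <= (be c p k * (y <= c / 2 ^+ k)%R%:R)%:E)%E.
  by rewrite lee_fin mulr_ge0 ?powR_ge0 ?ler0n.
have s1 := nneseries_ge0 (fun i _ _ => al0 i).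
have s2 := nneseries_ge0 (fun i _ _ => be0 i).
rewrite /neg_pow; case: ifPn => ypos; last first.
  rewrite [X in (_ <= _ + X)%E](@series_cst_infty _ _ (c `^ (-p))) ?powR_gt0 //.
    by rewrite addey // gt_eqF // (lt_le_trans _ (s1 _ 0%N)).
  move=> k; have -> : (y <= c / 2 ^+ k)%R.
    apply: (@le_trans _ _ 0%R); first by rewrite leNgt.
    by rewrite divr_ge0 ?exprn_ge0 ?ltW.
  rewrite mulr1 lee_fin /be; apply: anti => //.
    by rewrite divr_gt0 ?exprn_gt0.
  rewrite ler_pdivrMr ?exprn_gt0 // ler_peMr ?(ltW c0) //.
  by rewrite exprn_ege1 // ler1n.
case: (leP y c) => [yc | cy].
  have hex : exists k, (c / 2 ^+ k.+1 < y)%R.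
    have [k hk] := two_big (c / y); exists k.
    apply: (@le_lt_trans _ _ (c / 2 ^+ k)).
      rewrite ler_pM2l // lef_pV2 ?posrE ?exprn_gt0 //.
      by rewrite exprSr ler_peMr ?exprn_ge0 // ler1n.
    by rewrite ltr_pdivrMr ?exprn_gt0 // -ltr_pdivrMl // mulrC.
  case: (ex_minnP hex) => k Pk kmin.
  have yle : (y <= c / 2 ^+ k)%R.
    move: Pk kmin; case: k => [|j] Pk kmin; first by rewrite expr0 divr1.
    rewrite leNgt; apply/negP => h; have := kmin j h; by rewrite ltnn.
  apply: le_trans (leeDr _ _); last exact: nneseries_ge0.
  apply: le_trans (@term_le_series R (fun k => (be c p k * (y <= c / 2 ^+ k)%R%:R)%:E) k be0).
  rewrite /= yle mulr1 lee_fin /be; apply: anti => //; last exact: ltW.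
  by rewrite divr_gt0 ?exprn_gt0.
have hex : exists k, (y <= c * 2 ^+ k.+1)%R.
  have [k hk] := two_big (y / c); exists k.
  apply: ltW; apply: (@lt_le_trans _ _ (c * 2 ^+ k)).
    by rewrite mulrC -ltr_pdivrMr.
  by rewrite ler_pM2l // exprSr ler_peMr ?exprn_ge0 // ler1n.
case: (ex_minnP hex) => k Pk kmin.
have ylt : (c * 2 ^+ k < y)%R.
  move: Pk kmin; case: k => [|j] Pk kmin; first by rewrite expr0 mulr1.
  rewrite ltNge; apply/negP => h; have := kmin j h; by rewrite ltnn.
apply: le_trans (leeDl _ _); last exact: nneseries_ge0.
apply: le_trans (@term_le_series R (fun k => (al c p k * (y <= c * 2 ^+ k.+1)%R%:R)%:E) k al0).
rewrite /= Pk mulr1 lee_fin /al; apply: anti => //; last exact: ltW.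
by rewrite mulr_gt0 ?exprn_gt0.
Qed.
End PW2.
Arguments al {R}.
Arguments be {R}.
Section Alg.
Variable R : realType.

Lemma powRX_nat (x e : R) k : 0 <= x -> (x ^+ k) `^ e = (x `^ e) ^+ k.
Proof.
move=> x0.
by rewrite -powR_mulrn // -powRrM mulrC powRrM powR_mulrn // powR_ge0.
Qed.

Lemma powR_Xn (x e : R) m : (x `^ e) ^+ m = x `^ (e * m%:R).
Proof. by rewrite powRrM powR_mulrn // powR_ge0. Qed.

Lemma powRV (x e : R) : 0 < x -> (x^-1) `^ e = x `^ (- e).
Proof. by move=> x0; rewrite -powR_inv1 ?ltW// -powRrM mulN1r. Qed.

Lemma powRDp (x r s : R) : 0 < x -> x `^ (r + s) = x `^ r * x `^ s.
Proof. by move=> x0; rewrite powRD // (gt_eqF x0) implybT. Qed.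

Lemma prod_split (K b x : R) (a : nat -> R) m : 0 <= x ->
  (forall i, (0 < i)%N -> 0 < a i) ->
  \prod_(1 <= i < m) (K * (x / a i) `^ b) =
  (K * x `^ b) ^+ m.-1 * \prod_(1 <= i < m) a i `^ (- b).
Proof.
move=> x0 a0.
rewrite (eq_big_nat _ _ (F2 := fun i => (K * x `^ b) * a i `^ (- b))); last first.
  move=> i /andP [i1 _]; have ai := a0 i i1.
  rewrite powRM // ?invr_ge0 ?(ltW ai) // powRV //.
  by rewrite mulrA.
by rewrite big_split /= prodr_const_nat subn1.
Qed.

Lemma large_id (K b p c A : R) m k : 0 < c ->
 (c * 2 ^+ k) `^ (- p) * ((K * (c * 2 ^+ k.+1) `^ b) ^+ m * A) =
 (K * 2 `^ b) ^+ m * A * c `^ (- p + b * m%:R) * (2 `^ (- p + b * m%:R)) ^+ k.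
Proof.
move=> c0.
have y0 : 0 < c * 2 ^+ k by rewrite mulr_gt0 // exprn_gt0.
rewrite exprSr (mulrA c (2 ^+ k) 2) (@powRM _ (c * 2 ^+ k) 2 b (ltW y0)) ?ler0n //.
have -> : K * ((c * 2 ^+ k) `^ b * 2 `^ b) = (c * 2 ^+ k) `^ b * (K * 2 `^ b) by ring.
rewrite exprMn (powR_Xn (c * 2 ^+ k) b m) !mulrA -powRDp //.
rewrite powRM ?ltW ?exprn_gt0 // powRX_nat ?ler0n //.
ring.
Qed.

Lemma small_id (K b p c A : R) m k : 0 < c ->
 (c / 2 ^+ k.+1) `^ (- p) * ((K * (c / 2 ^+ k) `^ b) ^+ m * A * (K * ((c / 2 ^+ k) / c) `^ b)) =
 (K * 2 `^ b) ^+ m.+1 * 2 `^ (p - b * m.+1%:R) * A * c `^ (- p + b * m%:R)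
   * (2 `^ (p - b * m.+1%:R)) ^+ k.
Proof.
move=> c0.
have t0 : 0 < 2 ^+ k.+1 :> R by rewrite exprn_gt0.
set u := c / 2 ^+ k.+1.
have u0 : 0 < u by rewrite divr_gt0.
have E1 : c / 2 ^+ k = u * 2.
  by rewrite /u exprS; field; rewrite expf_neq0 // pnatr_eq0.
rewrite E1 powRM ?ltW ?ler0n // powRM ?ltW ?mulr_gt0 ?invr_gt0 // powRM ?ltW ?ler0n //.
rewrite powRV //.
have -> : K * (u `^ b * 2 `^ b) = u `^ b * (K * 2 `^ b) by ring.
rewrite exprMn.
transitivity ((u `^ (- p) * (u `^ b) ^+ m.+1) * ((K * 2 `^ b) ^+ m.+1) * A * c `^ (- b)).
  by rewrite !exprS; ring.
rewrite powR_Xn -powRDp // /u powRM ?ltW ?invr_gt0 // powRV // powRX_nat ?ler0n //.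
have ee : - (- p + b * (m.+1)%:R) = p - b * (m.+1)%:R by ring.
rewrite ee.
have ef : - p + b * m%:R = (- p + b * (m.+1)%:R) + - b by rewrite -addn1 natrD; ring.
rewrite ef (@powRDp c (- p + b * (m.+1)%:R) (- b) c0) exprS.
ring.
Qed.
End Alg.
Section Prob.
Variables (d : measure_display) (T : measurableType d) (R : realType)
  (P : probability T R).

Lemma mle (f : T -> R) t : measurable_fun setT f -> measurable [set w | f w <= t].
Proof.
move=> mf; have := mf measurableT _ (measurable_itv `]-oo, t]).
rewrite setTI; congr measurable; apply/seteqP; split=> w /=; rewrite in_itv //=.
Qed.

Lemma indic_le (f : T -> R) t w : \1_[set w | f w <= t] w = (f w <= t)%R%:R :> R.
Proof.
rewrite indicE; case: (boolP (f w <= t)) => h.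
  by rewrite mem_set.
by rewrite memNset //=; apply/negP.
Qed.

Lemma int_term (S : T -> R) (a t : R) : measurable_fun setT S -> 0 <= a ->
  (\int[P]_w (a * (S w <= t)%R%:R)%R%:E = a%:E * P [set w | (S w <= t)%R])%E.
Proof.
move=> mS a0.
transitivity (\int[P]_w (a%:E * (\1_[set w | (S w <= t)%R] w)%:E))%E.
  by apply: eq_integral => w _; rewrite indic_le EFinM.
rewrite ge0_integralZl //.
- by rewrite integral_indic ?setIT //; exact: (mle S t mS).
- apply/measurable_realfun.measurable_EFinP; apply: measurable_realfun.measurable_indic; exact: (mle S t mS).
Qed.

Lemma mterm (S : T -> R) (a t : R) : measurable_fun setT S ->
  measurable_fun setT (fun w => ((a * (S w <= t)%R%:R)%R%:E : \bar R)).
Proof.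
move=> mS; apply/measurable_realfun.measurable_EFinP; rewrite (_ : (fun w => _) = (fun w => a * \1_[set w | (S w <= t)%R] w)); last first.
  by apply/funext => w; rewrite indic_le.
apply: measurable_realfun.measurable_funM; first exact: measurable_cst.
apply: measurable_realfun.measurable_indic; exact: (mle S t mS).
Qed.

Lemma mneg (S : T -> R) p : measurable_fun setT S ->
  measurable_fun setT (fun w => neg_pow p (S w)).
Proof.
move=> mS; rewrite /neg_pow; apply: measurable_fun_ifT.
- exact: measurable_fun_ltr (measurable_cst _) mS.
- apply/measurable_realfun.measurable_EFinP; exact: measurableT_comp (measurable_powR _) mS.
- exact: measurable_cst.
Qed.


Lemma int_bound (S : T -> R) (c p : R) : measurable_fun setT S ->
  (forall w, 0 <= S w) -> 0 <= p -> 0 < c ->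
  (\int[P]_w neg_pow p (S w) <=
     \sum_(k <oo) ((al c p k)%:E * P [set w | (S w <= c * 2 ^+ k.+1)%R])
   + \sum_(k <oo) ((be c p k)%:E * P [set w | (S w <= c / 2 ^+ k)%R]))%E.
Proof.
move=> mS S0 p0 c0.
pose f1 k w := ((al c p k * (S w <= c * 2 ^+ k.+1)%R%:R)%R%:E : \bar R).
pose f2 k w := ((be c p k * (S w <= c / 2 ^+ k)%R%:R)%R%:E : \bar R).
have f10 k w : (0 <= f1 k w)%E by rewrite lee_fin mulr_ge0 ?powR_ge0 ?ler0n.
have f20 k w : (0 <= f2 k w)%E by rewrite lee_fin mulr_ge0 ?powR_ge0 ?ler0n.
have mf1 k : measurable_fun setT (f1 k) by exact: mterm.
have mf2 k : measurable_fun setT (f2 k) by exact: mterm.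
have ms1 : measurable_fun setT (fun w => (\sum_(k <oo) f1 k w)%E).
  exact: (@ge0_emeasurable_sum _ _ _ _ f1 xpredT).
have ms2 : measurable_fun setT (fun w => (\sum_(k <oo) f2 k w)%E).
  exact: (@ge0_emeasurable_sum _ _ _ _ f2 xpredT).
have n0 : forall w, [set: T] w -> (0 <= neg_pow p (S w))%E.
  move=> w _; rewrite /neg_pow; case: ifP => _; last exact: leey.
  by rewrite lee_fin powR_ge0.
have G0 : forall w, [set: T] w -> (0 <= (\sum_(k <oo) f1 k w) + (\sum_(k <oo) f2 k w))%E.
  by move=> w _; rewrite adde_ge0 // nneseries_ge0.
have mG : measurable_fun setT (fun w => (\sum_(k <oo) f1 k w) + (\sum_(k <oo) f2 k w))%E.
  exact: emeasurable_funD.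
have H := @ge0_le_integral _ _ _ P _ measurableT (fun w => neg_pow p (S w))
   (fun w => (\sum_(k <oo) f1 k w) + (\sum_(k <oo) f2 k w))%E n0 (mneg S p mS) mG
   (fun w _ => @pointwise R p c (S w) p0 c0 (S0 w)).
apply: le_trans H _.
rewrite ge0_integralD //; last 2 first.
- by move=> w _; exact: nneseries_ge0.
- by move=> w _; exact: nneseries_ge0.
rewrite (integral_nneseries P measurableT mf1 (fun k w _ => f10 k w)).
rewrite (integral_nneseries P measurableT mf2 (fun k w _ => f20 k w)).
have E1 : (\sum_(k <oo) \int[P]_x f1 k x =
   \sum_(k <oo) ((al c p k)%:E * P [set w | (S w <= c * 2 ^+ k.+1)%R]))%E.
  apply: eq_eseriesr => k _; rewrite /f1; apply: int_term => //; exact: powR_ge0.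
have E2 : (\sum_(k <oo) \int[P]_x f2 k x =
   \sum_(k <oo) ((be c p k)%:E * P [set w | (S w <= c / 2 ^+ k)%R]))%E.
  apply: eq_eseriesr => k _; rewrite /f2; apply: int_term => //; exact: powR_ge0.
by rewrite E1 E2.
Qed.
End Prob.


Lemma bigI_mem (T : Type) (J : seq nat) (F : nat -> set T) (w : T) :
  (forall i, i \in J -> F i w) -> (\big[setI/setT]_(i <- J) F i) w.
Proof.
elim: J => [|j J IH] h; first by rewrite big_nil.
rewrite big_cons; split; first by apply: h; rewrite inE eqxx.
by apply: IH => i iJ; apply: h; rewrite inE iJ orbT.
Qed.

Lemma bigI_meas d (T : measurableType d) (J : seq nat) (F : nat -> set T) :
  (forall i, measurable (F i)) -> measurable (\big[setI/setT]_(i <- J) F i).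
Proof.
move=> mF; elim: J => [|j J IH]; first by rewrite big_nil.
by rewrite big_cons; exact: measurableI.
Qed.

Section Prob2.
Variables (d : measure_display) (T : measurableType d) (R : realType)
  (P : probability T R).

Lemma mle2 (f : T -> R) t : measurable_fun setT f -> measurable [set w | f w <= t].
Proof.
move=> mf; have := mf measurableT _ (measurable_itv `]-oo, t]).
rewrite setTI; congr measurable; apply/seteqP; split=> w /=; rewrite in_itv //=.
Qed.

Lemma prob_bound (X : nat -> T -> R) (a : nat -> R) (n : nat) (s : R) :
  (forall i, measurable_fun setT (X i)) -> mutually_independent P X ->
  (forall i w, 0 <= X i w) -> (forall i, (0 < i)%N -> 0 < a i) ->
  (P [set w | (\sum_(1 <= i < n.+1) a i * X i w <= s)%R] <=
   (\prod_(1 <= i < n.+1) fine (P [set w | (X i w <= s / a i)%R]))%:E)%E.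
Proof.
move=> mX ind X0 a0.
have mB i : measurable [set x : R | x <= s / a i].
  rewrite (_ : [set x : R | x <= s / a i] = [set` `]-oo, s / a i]]); first exact: measurable_itv.
  by apply/seteqP; split => x /=; rewrite in_itv.
have mXB i : measurable [set w | (X i w <= s / a i)%R] := mle2 (X i) (s / a i) (mX i).
have hind := ind (iota 1 n) (fun i => [set x : R | x <= s / a i]) (iota_uniq 1 n) (fun i _ => mB i).
have iE : index_iota 1 n.+1 = iota 1 n by rewrite /index_iota subSS subn0.
rewrite iE -prodEFin.
rewrite (eq_bigr (fun i => P [set w | (X i w <= s / a i)%R])); last first.
  by move=> i _; rewrite fineK // fin_num_measure.
apply: (@le_trans _ _ (P (\big[setI/setT]_(i <- iota 1 n) X i @^-1` [set x : R | x <= s / a i]))); last first.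
  by rewrite hind.
apply: le_measure; rewrite ?inE.
- apply: mle2; apply: measurable_sum => i.
  by apply: measurable_funM => //; exact: measurable_cst.
- by apply: bigI_meas => i; exact: mXB.
move=> w /= Sw; apply: bigI_mem => i; rewrite mem_iota => /andP [i1 in1] /=.
have ai := a0 i i1.
rewrite ler_pdivlMr // mulrC; apply: le_trans Sw.
rewrite -iE (bigD1_seq i) //=; last by rewrite iE iota_uniq.
  rewrite lerDl big_seq_cond sumr_ge0 // => j /andP [jin _].
  move: jin; rewrite mem_index_iota => /andP [j1 _].
  by rewrite mulr_ge0 // ltW // a0.
by rewrite iE mem_iota i1.
Qed.
End Prob2.

Theorem mainTheorem11 (R : realType) (b K p : R) :
  0 < b -> 0 < K -> 1 <= p -> ~ (p / b \is a Num.int) ->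
  let n := `| Num.ceil (p / b) |%N in
  exists C : R, 0 < C /\
    forall (d : measure_display) (T : measurableType d)
      (P : probability T R) (X : nat -> T -> R) (a : nat -> R),
      (forall i, measurable_fun setT (X i)) ->
      mutually_independent P X ->
      (forall i w, 0 <= X i w) ->
      (forall i, (0 < i)%N -> 0 < a i) ->
      (forall i (x : R), (0 < i)%N -> 0 < x ->
         (P [set w | (X i w <= x)%R] <= (K * x `^ b)%:E)%E) ->
      (\int[P]_w neg_pow p (\sum_(1 <= i < n.+1) a i * X i w)
        <= (C * (\prod_(1 <= i < n) a i `^ (- b))
              * a n `^ (- p + b * (n.-1)%:R))%:E)%E.
Proof.
move=> b0 K0 p1 nint n.
have p0 : 0 < p := lt_le_trans ltr01 p1.
have := n_facts _ _ _ b0 p0 nint; rewrite -/n => -[n0 [nlo nhi]].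
clearbody n.
set e := - p + b * (n.-1)%:R.
have e0 : e < 0 by rewrite /e addrC subr_lt0.
set z1 := 2 `^ e.
set z2 := 2 `^ (p - b * n%:R).
have z1lt : z1 < 1 := powR_lt1 _ e0.
have z2lt : z2 < 1 by apply: powR_lt1; rewrite subr_lt0.
have z10 : 0 < z1 by rewrite powR_gt0.
have z20 : 0 < z2 by rewrite powR_gt0.
set D1 := (K * 2 `^ b) ^+ n.-1.
set D2 := (K * 2 `^ b) ^+ n.
have D10 : 0 < D1 by rewrite exprn_gt0 // mulr_gt0 // powR_gt0.
have D20 : 0 < D2 by rewrite exprn_gt0 // mulr_gt0 // powR_gt0.
exists (D1 / (1 - z1) + D2 * z2 / (1 - z2)); split.
  by rewrite addr_gt0 // ?divr_gt0 ?mulr_gt0 // subr_gt0.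
move=> d T P X a mX ind X0 a0 hK.
set c := a n.
have c0 : 0 < c := a0 n n0.
set A := \prod_(1 <= i < n) a i `^ (- b).
have A0 : 0 <= A by rewrite prodr_ge0 // => i _; rewrite powR_ge0.
have mS : measurable_fun setT (fun w => \sum_(1 <= i < n.+1) a i * X i w).
  apply: measurable_sum => i; apply: measurable_funM => //; exact: measurable_cst.
have S0 w : 0 <= \sum_(1 <= i < n.+1) a i * X i w.
  rewrite big_seq_cond sumr_ge0 // => i /andP [iin _].
  move: iin; rewrite mem_index_iota => /andP [i1 _].
  by rewrite mulr_ge0 // ltW // a0.
have qle i t : (0 < i)%N -> 0 < t ->
    [/\ 0 <= fine (P [set w | (X i w <= t)%R]),
        fine (P [set w | (X i w <= t)%R]) <= 1 &
        fine (P [set w | (X i w <= t)%R]) <= K * t `^ b].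
  move=> i0 t0; have mA := @mle _ _ _ (X i) t (mX i).
  have fP : P [set w | (X i w <= t)%R] \is a fin_num := fin_num_measure P _ mA.
  split.
  - by apply: fine_ge0; exact: measure_ge0.
  - by rewrite -lee_fin fineK // probability_le1.
  - by rewrite -lee_fin fineK // hK.
apply: le_trans (@int_bound _ _ _ P _ c p mS S0 (ltW p0) c0) _.
have -> : (D1 / (1 - z1) + D2 * z2 / (1 - z2)) * A * c `^ e =
    D1 * A * c `^ e / (1 - z1) + D2 * z2 * A * c `^ e / (1 - z2).
  by field; rewrite !subr_eq0 (gt_eqF z1lt) (gt_eqF z2lt).
rewrite (EFinD (D1 * A * c `^ e / (1 - z1))); apply: leeD.
  have ha : 0 <= D1 * A * c `^ e by rewrite mulr_ge0 ?powR_ge0 // mulr_ge0 // ltW.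
  apply: le_trans (geo_le _ _ _ ha z10 z1lt).
  apply: lee_nneseries.
    by move=> k _ _; rewrite mule_ge0 ?lee_fin ?powR_ge0 // measure_ge0.
  move=> k _.
  set s := c * 2 ^+ k.+1.
  have s0 : 0 < s by rewrite mulr_gt0 // exprn_gt0.
  apply: le_trans (lee_wpmul2l _ (@prob_bound _ _ _ P X a n s mX ind X0 a0)) _.
    by rewrite lee_fin powR_ge0.
  rewrite -EFinM lee_fin.
  rewrite big_nat_recr //=.
  apply: (@le_trans _ _ (al c p k * (\prod_(1 <= i < n) (K * (s / a i) `^ b)))).
    apply: ler_wpM2l; first exact: powR_ge0.
    rewrite -[X in _ <= X]mulr1; apply: ler_pM.
    - by apply: prodr_ge0 => i _; apply: fine_ge0; exact: measure_ge0.
    - by apply: fine_ge0; exact: measure_ge0.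
    - rewrite big_nat_cond [X in _ <= X]big_nat_cond; apply: ler_prod.
      move=> i /andP [/andP [i1 _] _].
      have [h1 _ h3] := qle i (s / a i) i1 (divr_gt0 s0 (a0 i i1)).
      by rewrite h1 h3.
    - by have [_ h2 _] := qle n (s / a n) n0 (divr_gt0 s0 (a0 n n0)).
  rewrite (prod_split _ _ _ _ a) ?(ltW s0) //.
  by rewrite /al /s large_id //.
have hb : 0 <= D2 * z2 * A * c `^ e.
  by rewrite mulr_ge0 ?powR_ge0 // mulr_ge0 // mulr_ge0 // ltW.
apply: le_trans (geo_le _ _ _ hb z20 z2lt).
apply: lee_nneseries.
  by move=> k _ _; rewrite mule_ge0 ?lee_fin ?powR_ge0 // measure_ge0.
move=> k _.
set s := c / 2 ^+ k.
have s0 : 0 < s by rewrite divr_gt0 // exprn_gt0.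
apply: le_trans (lee_wpmul2l _ (@prob_bound _ _ _ P X a n s mX ind X0 a0)) _.
  by rewrite lee_fin powR_ge0.
rewrite -EFinM lee_fin.
apply: (@le_trans _ _ (be c p k * (\prod_(1 <= i < n.+1) (K * (s / a i) `^ b)))).
  apply: ler_wpM2l; first exact: powR_ge0.
  rewrite big_nat_cond [X in _ <= X]big_nat_cond; apply: ler_prod.
  move=> i /andP [/andP [i1 _] _].
  have [h1 _ h3] := qle i (s / a i) i1 (divr_gt0 s0 (a0 i i1)).
  by rewrite h1 h3.
rewrite big_nat_recr //= (prod_split _ _ _ _ a) ?(ltW s0) //.
have := small_id _ K b p c A (n.-1) k c0; rewrite prednK // => h.
rewrite le_eqVlt; apply/orP; left; apply/eqP; exact: h.
Qed.
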